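(* Let $\mathfrak{A}$ be a complete atomic weakly associative relation algebra with universe $A$, and let $\mathfrak{B}=\langle B,T_\kappa,E_{\kappa\lambda}\rangle_{\kappa,\lambda<3}$ be its suitable structure. Then $\mathfrak{A}\cong\mathfrak{Ra}\,\mathfrak{Cm}\,\mathfrak{B}$, via the map $\varphi:A\to\mathcal{P}(B)$ defined by $\varphi(x)=\{t\in B: t_2\le x\}$.
   Context: WA: algebras $\langle A,+,\overline{\phantom{x}},;,\breve{\phantom{x}},1'\rangle$ with $x\cdot y=\overline{\overline{x}+\overline{y}}$, $0'=\overline{1'}$, $1=1'+0'$, $0=\overline{1}$, satisfying for all $x,y,z$: $x+y=y+x$; $x+(y+z)=(x+y)+z$; $\overline{\overline{x}+\overline{y}}+\overline{\overline{x}+y}=x$; $((x\cdot 1');1);1=(x\cdot1');1$; $(x+y);z=x;z+y;z$; $x;1'=x$; $\breve{\breve{x}}=x$; $\breve{(x+y)}=\breve{x}+\breve{y}$; $\breve{(x;y)}=\breve{y};\breve{x}$; $\breve{x};\overline{x;y}+\overline{y}=\overline{y}$. Complete/atomic refer to the Boolean reduct; $\mathrm{At}(\mathfrak{A})$ = atoms. Suitable structure: $B=\{s\in{}^3\mathrm{At}(\mathfrak{A}): s_2;s_0\ge s_1\}$; $T_\kappa=\{\langle s,t\rangle\in B\times B:s_\kappa=t_\kappa\}$; $E_{\kappa\kappa}=B$; for distinct $\kappa,\lambda$ with third index $\mu$, $E_{\kappa\lambda}=\{s\in B:s_\mu\le1'\}$. Complex algebra $\mathfrak{Cm}\,\mathfrak{B}=\langle\mathcal{P}(B),\cup,\cap,B\setminus\cdot,\emptyset,B,T_\kappa^*,E_{\kappa\lambda}\rangle_{\kappa,\lambda<3}$,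 with $T_\kappa^*(X)=\{y\in B:\exists x\in X\ \langle y,x\rangle\in T_\kappa\}$ as cylindrification $c_\kappa$ and $E_{\kappa\lambda}$ as diagonal $d_{\kappa\lambda}$. Relation-algebraic reduct: for an algebra $\mathfrak{C}=\langle C,+,\overline{\phantom{x}},c_\kappa,d_{\kappa\lambda}\rangle_{\kappa,\lambda<3}$, let $Nr_2\mathfrak{C}=\{x\in C:c_2x=x\}$, $x;y=c_2(c_1(d_{12}\cdot x)\cdot c_0(d_{02}\cdot y))$, $\breve{x}=c_2(d_{20}\cdot c_0(d_{01}\cdot c_1(d_{12}\cdot x)))$, and $\mathfrak{Ra}\,\mathfrak{C}=\langle Nr_2\mathfrak{C},+,\overline{\phantom{x}},;,\breve{\phantom{x}},d_{01}\rangle$. *)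

(* Defs.v *)
Set Implicit Arguments.

Record ra_sig := RaSig {
  car :> Type;
  rplus : car -> car -> car;
  rcompl : car -> car;
  rcomp : car -> car -> car;
  rconv : car -> car;
  rid : car
}.

Section Derived.
Variable A : ra_sig.
Definition rmeet (x y : A) : A := rcompl A (rplus A (rcompl A x) (rcompl A y)).
Definition rdiv : A := rcompl A (rid A).
Definition rtop : A := rplus A (rid A) rdiv.
Definition rbot : A := rcompl A rtop.
Definition rle (x y : A) : Prop := rplus A x y = y.
Definition is_atom (a : A) : Prop :=
  a <> rbot /\ forall y, rle y a -> y = rbot \/ y = a.
Definition is_lub (S : A -> Prop) (u : A) : Prop :=
  (forall x, S x -> rle x u) /\ (forall v, (forall x, S x -> rle x v) -> rle u v).
Definition complete : Prop := forall S : A -> Prop, exists u, is_lub S u.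
Definition atomic : Prop :=
  forall x : A, x <> rbot -> exists a, is_atom a /\ rle a x.
End Derived.

Definition is_WA (A : ra_sig) : Prop :=
  let p := rplus A in let c := rcompl A in let m := rcomp A in
  let v := rconv A in let e := rid A in
  (forall x y, p x y = p y x) /\
  (forall x y z, p x (p y z) = p (p x y) z) /\
  (forall x y, p (c (p (c x) (c y))) (c (p (c x) y)) = x) /\
  (forall x, m (m (rmeet A x e) (rtop A)) (rtop A) = m (rmeet A x e) (rtop A)) /\
  (forall x y z, m (p x y) z = p (m x z) (m y z)) /\
  (forall x, m x e = x) /\
  (forall x, v (v x) = x) /\
  (forall x y, v (p x y) = p (v x) (v y)) /\
  (forall x y, v (m x y) = m (v y) (v x)) /\
  (forall x y, p (m (v x) (c (m x y))) (c y) = c y).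

Inductive I3 := I0 | I1 | I2.

Definition third (k l : I3) : I3 :=
  match k, l with
  | I0, I1 | I1, I0 => I2
  | I0, I2 | I2, I0 => I1
  | _, _ => I0
  end.

Record suitable (A : ra_sig) := Suit {
  tr : I3 -> A;
  tr_atom : forall k, is_atom A (tr k);
  tr_cond : rle A (tr I1) (rcomp A (tr I2) (tr I0))
}.

Section Complex.
Variable A : ra_sig.
Notation B := (suitable A).
Definition cset := B -> Prop.
Definition cunion (X Y : cset) : cset := fun s => X s \/ Y s.
Definition cinter (X Y : cset) : cset := fun s => X s /\ Y s.
Definition ccompl (X : cset) : cset := fun s => ~ X s.
(* cylindrification c_k = T_k^* *)
Definition cyl (k : I3) (X : cset) : cset :=
  fun y => exists x, X x /\ tr y k = tr x k.
Definition diag (k l : I3) : cset :=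
  if (match k, l with I0, I0 | I1, I1 | I2, I2 => true | _, _ => false end)
  then fun _ => True
  else fun s => rle A (tr s (third k l)) (rid A).
Definition in_Nr2 (X : cset) : Prop := cyl I2 X = X.
Definition ccomp (X Y : cset) : cset :=
  cyl I2 (cinter (cyl I1 (cinter (diag I1 I2) X)) (cyl I0 (cinter (diag I0 I2) Y))).
Definition cconv (X : cset) : cset :=
  cyl I2 (cinter (diag I2 I0) (cyl I0 (cinter (diag I0 I1) (cyl I1 (cinter (diag I1 I2) X))))).
Definition cid : cset := diag I0 I1.

Definition phi (x : A) : cset := fun t => rle A (tr t I2) x.

Definition is_iso_onto_RaCm (f : A -> cset) : Prop :=
  (forall x, in_Nr2 (f x)) /\
  (forall x y, f x = f y -> x = y) /\
  (forall X, in_Nr2 X -> exists x, f x = X) /\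
  (forall x y, f (rplus A x y) = cunion (f x) (f y)) /\
  (forall x, f (rcompl A x) = ccompl (f x)) /\
  (forall x y, f (rcomp A x y) = ccomp (f x) (f y)) /\
  (forall x, f (rconv A x) = cconv (f x)) /\
  f (rid A) = cid.
End Complex.

(* Main.v *)
Require Import Defs.
From Stdlib Require Import Classical FunctionalExtensionality PropExtensionality.

Set Implicit Arguments.
Section Main.
Variable A : ra_sig.
Hypothesis HWA : is_WA A.
Hypothesis Hc : complete A.
Hypothesis Ha : atomic A.
Local Notation P := (rplus A).
Local Notation N := (rcompl A).

Lemma hk_0 : forall v0 v1 : A, P v0 v1 = P v1 v0.
Proof. destruct HWA as [h _]. exact h. Qed.
Lemma hk_1 : forall v0 v1 v2 : A, P (P v0 v1) v2 = P v0 (P v1 v2).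
Proof. destruct HWA as [_ [h _]]. intros; symmetry; apply h. Qed.
Lemma hk_2 : forall v0 v1 : A, P (N (P (N v0) (N v1))) (N (P (N v0) v1)) = v0.
Proof. destruct HWA as [_ [_ [h _]]]. exact h. Qed.
Lemma hk_4 : forall v0 v1 v2 : A, (P (P v0 v1) v2) = (P v0 (P v1 v2)).
Proof. intros v0 v1 v2. exact (f_equal (fun w_ => w_) (hk_1 v0 v1 v2) : (P (P v0 v1) v2) = (P v0 (P v1 v2))). Qed.
Lemma hk_3 : forall v0 v1 : A, (P v0 v1) = (P v1 v0).
Proof. intros v0 v1. exact (f_equal (fun w_ => w_) (hk_0 v0 v1) : (P v0 v1) = (P v1 v0)). Qed.
Lemma hk_12 : forall v0 v1 : A, (P (N (P (N v0) v1)) (N (P (N v0) (N v1)))) = v0.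
Proof. intros v0 v1. exact (eq_trans (f_equal (fun w_ => w_) (eq_sym (hk_3 (N (P (N v0) (N v1))) (N (P (N v0) v1)))) : (P (N (P (N v0) v1)) (N (P (N v0) (N v1)))) = (P (N (P (N v0) (N v1))) (N (P (N v0) v1)))) (f_equal (fun w_ => w_) (hk_2 v0 v1) : (P (N (P (N v0) (N v1))) (N (P (N v0) v1))) = v0)). Qed.
Lemma hk_20 : forall v0 v1 : A, v0 = (P (N (P (N v0) v1)) (N (P (N v1) (N v0)))).
Proof. intros v0 v1. exact (eq_trans (f_equal (fun w_ => w_) (eq_sym (hk_12 v0 v1)) : v0 = (P (N (P (N v0) v1)) (N (P (N v0) (N v1))))) (f_equal (fun w_ => (P (N (P (N v0) v1)) (N w_))) (hk_3 (N v0) (N v1)) : (P (N (P (N v0) v1)) (N (P (N v0) (N v1)))) = (P (N (P (N v0) v1)) (N (P (N v1) (N v0)))))). Qed.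
Lemma hk_67 : forall v0 v1 v2 : A, (P (N (P (N v0) v1)) (P (N (P (N v1) (N v0))) v2)) = (P v0 v2).
Proof. intros v0 v1 v2. exact (eq_trans (f_equal (fun w_ => w_) (eq_sym (hk_4 (N (P (N v0) v1)) (N (P (N v1) (N v0))) v2)) : (P (N (P (N v0) v1)) (P (N (P (N v1) (N v0))) v2)) = (P (P (N (P (N v0) v1)) (N (P (N v1) (N v0)))) v2)) (f_equal (fun w_ => (P w_ v2)) (eq_sym (hk_20 v0 v1)) : (P (P (N (P (N v0) v1)) (N (P (N v1) (N v0)))) v2) = (P v0 v2))). Qed.
Lemma hk_96 : forall v0 v1 : A, (P v0 (N (P (N v1) (N (N v0))))) = (P v1 (N (P (N v0) v1))).
Proof. intros v0 v1. exact (eq_trans (f_equal (fun w_ => w_) (eq_sym (hk_67 v0 v1 (N (P (N v1) (N (N v0)))))) : (P v0 (N (P (N v1) (N (N v0))))) = (P (N (P (N v0) v1)) (P (N (P (N v1) (N v0))) (N (P (N v1) (N (N v0))))))) (eq_trans (f_equal (fun w_ => (P (N (P (N v0) v1)) w_)) (hk_12 v1 (N v0)) : (P (N (P (N v0) v1)) (P (N (P (N v1) (N v0))) (N (P (N v1) (N (N v0)))))) = (P (N (P (N v0) v1)) v1)) (f_equal (fun w_ => w_) (hk_3 (N (P (N v0) v1)) v1) : (P (N (P (N v0) v1)) v1) = (P v1 (N (P (N v0) v1)))))). Qed.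
Lemma hk_36 : forall v0 v1 v2 : A, (P (N (P (N v0) v1)) (P (N (P (N v0) (N v1))) v2)) = (P v0 v2).
Proof. intros v0 v1 v2. exact (eq_trans (f_equal (fun w_ => w_) (eq_sym (hk_4 (N (P (N v0) v1)) (N (P (N v0) (N v1))) v2)) : (P (N (P (N v0) v1)) (P (N (P (N v0) (N v1))) v2)) = (P (P (N (P (N v0) v1)) (N (P (N v0) (N v1)))) v2)) (f_equal (fun w_ => (P w_ v2)) (hk_12 v0 v1) : (P (P (N (P (N v0) v1)) (N (P (N v0) (N v1)))) v2) = (P v0 v2))). Qed.
Lemma hk_356 : forall v0 v1 v2 : A, (P v0 (P (N (P (N v1) (N (N v0)))) v2)) = (P (N (P (N v0) v1)) (P v1 v2)).
Proof. intros v0 v1 v2. exact (eq_trans (f_equal (fun w_ => w_) (eq_sym (hk_67 v0 v1 (P (N (P (N v1) (N (N v0)))) v2))) : (P v0 (P (N (P (N v1) (N (N v0)))) v2)) = (P (N (P (N v0) v1)) (P (N (P (N v1) (N v0))) (P (N (P (N v1) (N (N v0)))) v2)))) (f_equal (fun w_ => (P (N (P (N v0) v1)) w_)) (hk_36 v1 (N v0) v2) : (P (N (P (N v0) v1)) (P (N (P (N v1) (N v0))) (P (N (P (N v1) (N (N v0)))) v2))) = (P (N (P (N v0) v1)) (P v1 v2)))). Qed.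
Lemma hk_54 : forall v0 v1 : A, (P v0 (N (P (N v0) (N (N v1))))) = (P v0 (N (P (N v0) v1))).
Proof. intros v0 v1. exact (eq_trans (f_equal (fun w_ => w_) (eq_sym (hk_36 v0 v1 (N (P (N v0) (N (N v1)))))) : (P v0 (N (P (N v0) (N (N v1))))) = (P (N (P (N v0) v1)) (P (N (P (N v0) (N v1))) (N (P (N v0) (N (N v1))))))) (eq_trans (f_equal (fun w_ => (P (N (P (N v0) v1)) w_)) (hk_12 v0 (N v1)) : (P (N (P (N v0) v1)) (P (N (P (N v0) (N v1))) (N (P (N v0) (N (N v1)))))) = (P (N (P (N v0) v1)) v0)) (f_equal (fun w_ => w_) (hk_3 (N (P (N v0) v1)) v0) : (P (N (P (N v0) v1)) v0) = (P v0 (N (P (N v0) v1)))))). Qed.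
Lemma hk_434 : forall v0 v1 : A, (P (N (P (N v0) v1)) (P v1 (N (P (N v1) (N v0))))) = (P v0 v1).
Proof. intros v0 v1. exact (eq_trans (f_equal (fun w_ => (P (N (P (N v0) v1)) w_)) (eq_sym (hk_54 v1 (N v0))) : (P (N (P (N v0) v1)) (P v1 (N (P (N v1) (N v0))))) = (P (N (P (N v0) v1)) (P v1 (N (P (N v1) (N (N (N v0)))))))) (eq_trans (f_equal (fun w_ => w_) (eq_sym (hk_356 v0 v1 (N (P (N v1) (N (N (N v0))))))) : (P (N (P (N v0) v1)) (P v1 (N (P (N v1) (N (N (N v0))))))) = (P v0 (P (N (P (N v1) (N (N v0)))) (N (P (N v1) (N (N (N v0)))))))) (f_equal (fun w_ => (P v0 w_)) (hk_12 v1 (N (N v0))) : (P v0 (P (N (P (N v1) (N (N v0)))) (N (P (N v1) (N (N (N v0))))))) = (P v0 v1)))). Qed.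
Lemma hk_546 : forall v0 : A, (P v0 (N v0)) = (P v0 (P (N (P v0 (N v0))) (N (P v0 (N (N v0)))))).
Proof. intros v0. exact (eq_trans (f_equal (fun w_ => w_) (eq_sym (hk_3 (N v0) v0)) : (P v0 (N v0)) = (P (N v0) v0)) (eq_trans (f_equal (fun w_ => w_) (eq_sym (hk_434 (N v0) v0)) : (P (N v0) v0) = (P (N (P (N (N v0)) v0)) (P v0 (N (P (N v0) (N (N v0))))))) (eq_trans (f_equal (fun w_ => (P (N (P (N (N v0)) v0)) w_)) (hk_96 v0 v0) : (P (N (P (N (N v0)) v0)) (P v0 (N (P (N v0) (N (N v0)))))) = (P (N (P (N (N v0)) v0)) (P v0 (N (P (N v0) v0))))) (eq_trans (f_equal (fun w_ => w_) (hk_3 (N (P (N (N v0)) v0)) (P v0 (N (P (N v0) v0)))) : (P (N (P (N (N v0)) v0)) (P v0 (N (P (N v0) v0)))) = (P (P v0 (N (P (N v0) v0))) (N (P (N (N v0)) v0)))) (eq_trans (f_equal (fun w_ => w_) (hk_4 v0 (N (P (N v0) v0)) (N (P (N (N v0)) v0))) : (P (P v0 (N (P (N v0) v0))) (N (P (N (N v0)) v0))) = (P v0 (P (N (P (N v0) v0)) (N (P (N (N v0)) v0))))) (eq_trans (f_equal (fun w_ => (P v0 (P (N w_) (N (P (N (N v0)) v0))))) (hk_3 (N v0) v0) : (P v0 (P (N (P (N v0) v0)) (N (P (N (N v0)) v0)))) = (P v0 (P (N (P v0 (N v0))) (N (P (N (N v0)) v0))))) (f_equal (fun w_ => (P v0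 (P (N (P v0 (N v0))) (N w_)))) (hk_3 (N (N v0)) v0) : (P v0 (P (N (P v0 (N v0))) (N (P (N (N v0)) v0)))) = (P v0 (P (N (P v0 (N v0))) (N (P v0 (N (N v0))))))))))))). Qed.
Lemma hk_561 : forall v0 : A, (P (N v0) (N (N v0))) = (P v0 (N v0)).
Proof. intros v0. exact (eq_trans (f_equal (fun w_ => w_) (hk_546 (N v0)) : (P (N v0) (N (N v0))) = (P (N v0) (P (N (P (N v0) (N (N v0)))) (N (P (N v0) (N (N (N v0)))))))) (eq_trans (f_equal (fun w_ => (P (N v0) w_)) (hk_12 v0 (N (N v0))) : (P (N v0) (P (N (P (N v0) (N (N v0)))) (N (P (N v0) (N (N (N v0))))))) = (P (N v0) v0)) (f_equal (fun w_ => w_) (hk_3 (N v0) v0) : (P (N v0) v0) = (P v0 (N v0))))). Qed.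
Lemma hk_668 : forall v0 : A, (N v0) = (P (N (P v0 (N v0))) (N (P v0 (N (N v0))))).
Proof. intros v0. exact (eq_trans (f_equal (fun w_ => w_) (hk_20 (N v0) v0) : (N v0) = (P (N (P (N (N v0)) v0)) (N (P (N v0) (N (N v0)))))) (eq_trans (f_equal (fun w_ => (P (N (P (N (N v0)) v0)) (N w_))) (hk_561 v0) : (P (N (P (N (N v0)) v0)) (N (P (N v0) (N (N v0))))) = (P (N (P (N (N v0)) v0)) (N (P v0 (N v0))))) (eq_trans (f_equal (fun w_ => w_) (hk_3 (N (P (N (N v0)) v0)) (N (P v0 (N v0)))) : (P (N (P (N (N v0)) v0)) (N (P v0 (N v0)))) = (P (N (P v0 (N v0))) (N (P (N (N v0)) v0)))) (f_equal (fun w_ => (P (N (P v0 (N v0))) (N w_))) (hk_3 (N (N v0)) v0) : (P (N (P v0 (N v0))) (N (P (N (N v0)) v0))) = (P (N (P v0 (N v0))) (N (P v0 (N (N v0))))))))). Qed.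
Lemma hk_702 : forall v0 : A, (N (N v0)) = v0.
Proof. intros v0. exact (eq_trans (f_equal (fun w_ => w_) (hk_668 (N v0)) : (N (N v0)) = (P (N (P (N v0) (N (N v0)))) (N (P (N v0) (N (N (N v0))))))) (f_equal (fun w_ => w_) (hk_12 v0 (N (N v0))) : (P (N (P (N v0) (N (N v0)))) (N (P (N v0) (N (N (N v0)))))) = v0)). Qed.
Lemma hk_815 : forall v0 v1 : A, (N v0) = (P (N (P v0 v1)) (N (P v0 (N v1)))).
Proof. intros v0 v1. exact (eq_trans (f_equal (fun w_ => w_) (eq_sym (hk_12 (N v0) v1)) : (N v0) = (P (N (P (N (N v0)) v1)) (N (P (N (N v0)) (N v1))))) (eq_trans (f_equal (fun w_ => (P (N (P w_ v1)) (N (P (N (N v0)) (N v1))))) (hk_702 v0) : (P (N (P (N (N v0)) v1)) (N (P (N (N v0)) (N v1)))) = (P (N (P v0 v1)) (N (P (N (N v0)) (N v1))))) (f_equal (fun w_ => (P (N (P v0 v1)) (N (P w_ (N v1))))) (hk_702 v0) : (P (N (P v0 v1)) (N (P (N (N v0)) (N v1)))) = (P (N (P v0 v1)) (N (P v0 (N v1))))))). Qed.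
Lemma hk_3721 : forall v0 v1 v2 : A, (N (P v0 v1)) = (P (N (P v0 (P v1 v2))) (N (P v0 (P v1 (N v2))))).
Proof. intros v0 v1 v2. exact (eq_trans (f_equal (fun w_ => w_) (hk_815 (P v0 v1) v2) : (N (P v0 v1)) = (P (N (P (P v0 v1) v2)) (N (P (P v0 v1) (N v2))))) (eq_trans (f_equal (fun w_ => (P (N w_) (N (P (P v0 v1) (N v2))))) (hk_4 v0 v1 v2) : (P (N (P (P v0 v1) v2)) (N (P (P v0 v1) (N v2)))) = (P (N (P v0 (P v1 v2))) (N (P (P v0 v1) (N v2))))) (f_equal (fun w_ => (P (N (P v0 (P v1 v2))) (N w_))) (hk_4 v0 v1 (N v2)) : (P (N (P v0 (P v1 v2))) (N (P (P v0 v1) (N v2)))) = (P (N (P v0 (P v1 v2))) (N (P v0 (P v1 (N v2)))))))). Qed.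
Lemma hk_896 : forall v0 v1 : A, (N v0) = (P (N (P v1 v0)) (N (P v0 (N v1)))).
Proof. intros v0 v1. exact (eq_trans (f_equal (fun w_ => w_) (hk_815 v0 v1) : (N v0) = (P (N (P v0 v1)) (N (P v0 (N v1))))) (f_equal (fun w_ => (P (N w_) (N (P v0 (N v1))))) (hk_3 v0 v1) : (P (N (P v0 v1)) (N (P v0 (N v1)))) = (P (N (P v1 v0)) (N (P v0 (N v1)))))). Qed.
Lemma hk_3472 : forall v0 v1 v2 : A, (P (N (P (N v0) v1)) (P v1 v2)) = (P v0 (P (N (P (N v1) v0)) v2)).
Proof. intros v0 v1 v2. exact (eq_trans (f_equal (fun w_ => w_) (eq_sym (hk_356 v0 v1 v2)) : (P (N (P (N v0) v1)) (P v1 v2)) = (P v0 (P (N (P (N v1) (N (N v0)))) v2))) (f_equal (fun w_ => (P v0 (P (N (P (N v1) w_)) v2))) (hk_702 v0) : (P v0 (P (N (P (N v1) (N (N v0)))) v2)) = (P v0 (P (N (P (N v1) v0)) v2)))). Qed.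
Lemma hk_5543 : forall v0 v1 : A, (P v0 (P (N (P v1 v0)) (N (P (N v1) v0)))) = (P v1 (N v1)).
Proof. intros v0 v1. exact (eq_trans (f_equal (fun w_ => w_) (eq_sym (hk_4 v0 (N (P v1 v0)) (N (P (N v1) v0)))) : (P v0 (P (N (P v1 v0)) (N (P (N v1) v0)))) = (P (P v0 (N (P v1 v0))) (N (P (N v1) v0)))) (eq_trans (f_equal (fun w_ => w_) (eq_sym (hk_3 (N (P (N v1) v0)) (P v0 (N (P v1 v0))))) : (P (P v0 (N (P v1 v0))) (N (P (N v1) v0))) = (P (N (P (N v1) v0)) (P v0 (N (P v1 v0))))) (eq_trans (f_equal (fun w_ => (P (N (P (N v1) v0)) (P v0 (N (P v1 w_))))) (eq_sym (hk_702 v0)) : (P (N (P (N v1) v0)) (P v0 (N (P v1 v0)))) = (P (N (P (N v1) v0)) (P v0 (N (P v1 (N (N v0))))))) (eq_trans (f_equal (fun w_ => w_) (hk_3472 v1 v0 (N (P v1 (N (N v0))))) : (P (N (P (N v1) v0)) (P v0 (N (P v1 (N (N v0)))))) = (P v1 (P (N (P (N v0) v1)) (N (P v1 (N (N v0))))))) (f_equal (fun w_ => (P v1 w_)) (eq_sym (hk_896 v1 (N v0))) : (P v1 (P (N (P (N v0) v1)) (N (P v1 (N (N v0)))))) = (P v1 (N v1))))))). Qed.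
Lemma hk_5718 : forall v0 v1 : A, (P v0 (N v0)) = (P v1 (P (N (P v1 v0)) (N (P (N v0) v1)))).
Proof. intros v0 v1. exact (eq_trans (f_equal (fun w_ => w_) (eq_sym (hk_5543 v1 v0)) : (P v0 (N v0)) = (P v1 (P (N (P v0 v1)) (N (P (N v0) v1))))) (f_equal (fun w_ => (P v1 (P (N w_) (N (P (N v0) v1))))) (hk_3 v0 v1) : (P v1 (P (N (P v0 v1)) (N (P (N v0) v1)))) = (P v1 (P (N (P v1 v0)) (N (P (N v0) v1)))))). Qed.
Lemma hk_5879 : forall v0 v1 : A, (P v0 (N v0)) = (P v1 (N v1)).
Proof. intros v0 v1. exact (eq_trans (f_equal (fun w_ => w_) (hk_5718 v0 (N v1)) : (P v0 (N v0)) = (P (N v1) (P (N (P (N v1) v0)) (N (P (N v0) (N v1)))))) (eq_trans (f_equal (fun w_ => (P (N v1) w_)) (eq_sym (hk_20 v1 v0)) : (P (N v1) (P (N (P (N v1) v0)) (N (P (N v0) (N v1))))) = (P (N v1) v1)) (f_equal (fun w_ => w_) (hk_3 (N v1) v1) : (P (N v1) v1) = (P v1 (N v1))))). Qed.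
Lemma hk_6104 : forall v0 v1 v2 : A, (P v0 (N v0)) = (P v1 (P v2 (N (P v1 v2)))).
Proof. intros v0 v1 v2. exact (eq_trans (f_equal (fun w_ => w_) (eq_sym (hk_5879 (P v1 v2) v0)) : (P v0 (N v0)) = (P (P v1 v2) (N (P v1 v2)))) (f_equal (fun w_ => w_) (hk_4 v1 v2 (N (P v1 v2))) : (P (P v1 v2) (N (P v1 v2))) = (P v1 (P v2 (N (P v1 v2)))))). Qed.
Lemma hk_778 : forall v0 : A, (N v0) = (P (N (P v0 v0)) (N (P v0 (N v0)))).
Proof. intros v0. exact (eq_trans (f_equal (fun w_ => w_) (hk_668 v0) : (N v0) = (P (N (P v0 (N v0))) (N (P v0 (N (N v0)))))) (eq_trans (f_equal (fun w_ => (P (N (P v0 (N v0))) (N (P v0 w_)))) (hk_702 v0) : (P (N (P v0 (N v0))) (N (P v0 (N (N v0))))) = (P (N (P v0 (N v0))) (N (P v0 v0)))) (f_equal (fun w_ => w_) (hk_3 (N (P v0 (N v0))) (N (P v0 v0))) : (P (N (P v0 (N v0))) (N (P v0 v0))) = (P (N (P v0 v0)) (N (P v0 (N v0))))))). Qed.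
Lemma hk_6751 : forall v0 v1 : A, (N v0) = (P (N (P v0 v0)) (N (P v1 (N v1)))).
Proof. intros v0 v1. exact (eq_trans (f_equal (fun w_ => w_) (hk_778 v0) : (N v0) = (P (N (P v0 v0)) (N (P v0 (N v0))))) (f_equal (fun w_ => (P (N (P v0 v0)) (N w_))) (hk_5879 v0 v1) : (P (N (P v0 v0)) (N (P v0 (N v0)))) = (P (N (P v0 v0)) (N (P v1 (N v1)))))). Qed.
Lemma hk_6897 : forall v0 v1 : A, (P v0 (N v0)) = (P v1 (P v1 (N v1))).
Proof. intros v0 v1. exact (eq_trans (f_equal (fun w_ => w_) (hk_6104 v0 (P v1 v1) (N (P v1 v1))) : (P v0 (N v0)) = (P (P v1 v1) (P (N (P v1 v1)) (N (P (P v1 v1) (N (P v1 v1))))))) (eq_trans (f_equal (fun w_ => (P (P v1 v1) w_)) (eq_sym (hk_6751 v1 (P v1 v1))) : (P (P v1 v1) (P (N (P v1 v1)) (N (P (P v1 v1) (N (P v1 v1)))))) = (P (P v1 v1) (N v1))) (f_equal (fun w_ => w_) (hk_4 v1 v1 (N v1)) : (P (P v1 v1) (N v1)) = (P v1 (P v1 (N v1)))))). Qed.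
Lemma hk_7104 : forall v0 v1 v2 : A, (P v0 (N v0)) = (P v1 (P v2 (N v2))).
Proof. intros v0 v1 v2. exact (eq_trans (f_equal (fun w_ => w_) (hk_6897 v0 v1) : (P v0 (N v0)) = (P v1 (P v1 (N v1)))) (f_equal (fun w_ => (P v1 w_)) (hk_5879 v1 v2) : (P v1 (P v1 (N v1))) = (P v1 (P v2 (N v2))))). Qed.
Lemma hk_26181 : forall v0 v1 v2 : A, (N v0) = (P (N (P v0 v0)) (N (P v1 (P v2 (N v2))))).
Proof. intros v0 v1 v2. exact (eq_trans (f_equal (fun w_ => w_) (hk_778 v0) : (N v0) = (P (N (P v0 v0)) (N (P v0 (N v0))))) (f_equal (fun w_ => (P (N (P v0 v0)) (N w_))) (hk_7104 v0 v1 v2) : (P (N (P v0 v0)) (N (P v0 (N v0)))) = (P (N (P v0 v0)) (N (P v1 (P v2 (N v2))))))). Qed.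
Lemma hk_26480 : forall v0 : A, (N (P v0 v0)) = (N (P v0 (P v0 v0))).
Proof. intros v0. exact (eq_trans (f_equal (fun w_ => w_) (hk_26181 (P v0 v0) (P v0 v0) v0) : (N (P v0 v0)) = (P (N (P (P v0 v0) (P v0 v0))) (N (P (P v0 v0) (P v0 (N v0)))))) (eq_trans (f_equal (fun w_ => w_) (eq_sym (hk_3721 (P v0 v0) v0 v0)) : (P (N (P (P v0 v0) (P v0 v0))) (N (P (P v0 v0) (P v0 (N v0))))) = (N (P (P v0 v0) v0))) (f_equal (fun w_ => (N w_)) (hk_3 (P v0 v0) v0) : (N (P (P v0 v0) v0)) = (N (P v0 (P v0 v0)))))). Qed.
Lemma hk_985 : forall v0 v1 : A, (P v0 (N (P (N v1) v0))) = (P v1 (N (P (N v0) v1))).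
Proof. intros v0 v1. exact (eq_trans (f_equal (fun w_ => w_) (eq_sym (hk_96 v1 v0)) : (P v0 (N (P (N v1) v0))) = (P v1 (N (P (N v0) (N (N v1)))))) (f_equal (fun w_ => (P v1 (N (P (N v0) w_)))) (hk_702 v1) : (P v1 (N (P (N v0) (N (N v1))))) = (P v1 (N (P (N v0) v1))))). Qed.
Lemma hk_1084 : forall v0 v1 : A, (P (N v0) (N (P (N v1) (N v0)))) = (P v1 (N (P v0 v1))).
Proof. intros v0 v1. exact (eq_trans (f_equal (fun w_ => w_) (eq_sym (hk_985 v1 (N v0))) : (P (N v0) (N (P (N v1) (N v0)))) = (P v1 (N (P (N (N v0)) v1)))) (f_equal (fun w_ => (P v1 (N (P w_ v1)))) (hk_702 v0) : (P v1 (N (P (N (N v0)) v1))) = (P v1 (N (P v0 v1))))). Qed.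
Lemma hk_1957 : forall v0 v1 : A, (P (N v0) (N (P v1 (N v0)))) = (P (N v1) (N (P v0 (N v1)))).
Proof. intros v0 v1. exact (eq_trans (f_equal (fun w_ => w_) (eq_sym (hk_1084 v1 (N v0))) : (P (N v0) (N (P v1 (N v0)))) = (P (N v1) (N (P (N (N v0)) (N v1))))) (f_equal (fun w_ => (P (N v1) (N (P w_ (N v1))))) (hk_702 v0) : (P (N v1) (N (P (N (N v0)) (N v1)))) = (P (N v1) (N (P v0 (N v1)))))). Qed.
Lemma hk_7368 : forall v0 v1 v2 : A, (P v0 (N v0)) = (P v1 (P (N v1) v2)).
Proof. intros v0 v1 v2. exact (eq_trans (f_equal (fun w_ => w_) (hk_7104 v0 v2 v1) : (P v0 (N v0)) = (P v2 (P v1 (N v1)))) (eq_trans (f_equal (fun w_ => w_) (hk_3 v2 (P v1 (N v1))) : (P v2 (P v1 (N v1))) = (P (P v1 (N v1)) v2)) (f_equal (fun w_ => w_) (hk_4 v1 (N v1) v2) : (P (P v1 (N v1)) v2) = (P v1 (P (N v1) v2))))). Qed.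
Lemma hk_3097 : forall v0 : A, (P v0 v0) = (P v0 (N (P v0 (P (N v0) (N (P v0 v0)))))).
Proof. intros v0. exact (eq_trans (f_equal (fun w_ => w_) (eq_sym (hk_12 (P v0 v0) (P v0 (N v0)))) : (P v0 v0) = (P (N (P (N (P v0 v0)) (P v0 (N v0)))) (N (P (N (P v0 v0)) (N (P v0 (N v0))))))) (eq_trans (f_equal (fun w_ => (P (N (P (N (P v0 v0)) (P v0 (N v0)))) (N w_))) (eq_sym (hk_778 v0)) : (P (N (P (N (P v0 v0)) (P v0 (N v0)))) (N (P (N (P v0 v0)) (N (P v0 (N v0)))))) = (P (N (P (N (P v0 v0)) (P v0 (N v0)))) (N (N v0)))) (eq_trans (f_equal (fun w_ => w_) (hk_3 (N (P (N (P v0 v0)) (P v0 (N v0)))) (N (N v0))) : (P (N (P (N (P v0 v0)) (P v0 (N v0)))) (N (N v0))) = (P (N (N v0)) (N (P (N (P v0 v0)) (P v0 (N v0)))))) (eq_trans (f_equal (fun w_ => (P w_ (N (P (N (P v0 v0)) (P v0 (N v0)))))) (hk_702 v0) : (P (N (N v0)) (N (P (N (P v0 v0)) (P v0 (N v0))))) = (P v0 (N (P (N (P v0 v0)) (P v0 (N v0)))))) (eq_trans (f_equal (fun w_ => (P v0 (N w_))) (hk_3 (N (P v0 v0)) (P v0 (N v0))) : (P v0 (N (P (N (P v0 v0)) (P v0 (N v0))))) = (P v0 (N (P (P v0 (N v0)) (N (P v0 v0)))))) (f_equal (fun w_ => (P v0 (N w_))) (hk_4 v0 (N v0) (N (P v0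 v0))) : (P v0 (N (P (P v0 (N v0)) (N (P v0 v0))))) = (P v0 (N (P v0 (P (N v0) (N (P v0 v0)))))))))))). Qed.
Lemma hk_7681 : forall v0 v1 : A, (P v0 v0) = (P v0 (N (P v1 (N v1)))).
Proof. intros v0 v1. exact (eq_trans (f_equal (fun w_ => w_) (hk_3097 v0) : (P v0 v0) = (P v0 (N (P v0 (P (N v0) (N (P v0 v0))))))) (f_equal (fun w_ => (P v0 (N w_))) (eq_sym (hk_7368 v1 v0 (N (P v0 v0)))) : (P v0 (N (P v0 (P (N v0) (N (P v0 v0)))))) = (P v0 (N (P v1 (N v1)))))). Qed.
Lemma hk_14183 : forall v0 v1 : A, (P v0 v0) = (P v0 (N (P v1 (P v1 (N v1))))).
Proof. intros v0 v1. exact (eq_trans (f_equal (fun w_ => w_) (hk_7681 v0 (rid A)) : (P v0 v0) = (P v0 (N (P (rid A) (N (rid A)))))) (f_equal (fun w_ => (P v0 (N w_))) (hk_6897 (rid A) v1) : (P v0 (N (P (rid A) (N (rid A))))) = (P v0 (N (P v1 (P v1 (N v1))))))). Qed.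
Lemma hk_87497 : forall v0 : A, (N v0) = (P (N v0) (N v0)).
Proof. intros v0. exact (eq_trans (f_equal (fun w_ => w_) (hk_815 v0 (P v0 v0)) : (N v0) = (P (N (P v0 (P v0 v0))) (N (P v0 (N (P v0 v0)))))) (eq_trans (f_equal (fun w_ => (P w_ (N (P v0 (N (P v0 v0)))))) (eq_sym (hk_26480 v0)) : (P (N (P v0 (P v0 v0))) (N (P v0 (N (P v0 v0))))) = (P (N (P v0 v0)) (N (P v0 (N (P v0 v0)))))) (eq_trans (f_equal (fun w_ => w_) (hk_1957 (P v0 v0) v0) : (P (N (P v0 v0)) (N (P v0 (N (P v0 v0))))) = (P (N v0) (N (P (P v0 v0) (N v0))))) (eq_trans (f_equal (fun w_ => (P (N v0) (N w_))) (hk_4 v0 v0 (N v0)) : (P (N v0) (N (P (P v0 v0) (N v0)))) = (P (N v0) (N (P v0 (P v0 (N v0)))))) (f_equal (fun w_ => w_) (eq_sym (hk_14183 (N v0) v0)) : (P (N v0) (N (P v0 (P v0 (N v0))))) = (P (N v0) (N v0))))))). Qed.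
Lemma hk_8325 : forall v0 : A, (P (N (P v0 v0)) (N (P v0 v0))) = (N v0).
Proof. intros v0. exact (eq_trans (f_equal (fun w_ => w_) (hk_7681 (N (P v0 v0)) v0) : (P (N (P v0 v0)) (N (P v0 v0))) = (P (N (P v0 v0)) (N (P v0 (N v0))))) (f_equal (fun w_ => w_) (eq_sym (hk_778 v0)) : (P (N (P v0 v0)) (N (P v0 (N v0)))) = (N v0))). Qed.
Lemma hk_87803 : forall v0 : A, (N (P v0 v0)) = (N v0).
Proof. intros v0. exact (eq_trans (f_equal (fun w_ => w_) (hk_87497 (P v0 v0)) : (N (P v0 v0)) = (P (N (P v0 v0)) (N (P v0 v0)))) (f_equal (fun w_ => w_) (hk_8325 v0) : (P (N (P v0 v0)) (N (P v0 v0))) = (N v0))). Qed.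
Lemma hk_88320 : forall v0 : A, (P v0 v0) = v0.
Proof. intros v0. exact (eq_trans (f_equal (fun w_ => w_) (eq_sym (hk_702 (P v0 v0))) : (P v0 v0) = (N (N (P v0 v0)))) (eq_trans (f_equal (fun w_ => (N w_)) (hk_87803 v0) : (N (N (P v0 v0))) = (N (N v0))) (f_equal (fun w_ => w_) (hk_702 v0) : (N (N v0)) = v0))). Qed.
Lemma g_dn : forall a : A, (N (N a)) = a.
Proof. intros a. exact (f_equal (fun w_ => w_) (hk_702 a) : (N (N a)) = a). Qed.
Lemma g_idem : forall a : A, (P a a) = a.
Proof. intros a. exact (f_equal (fun w_ => w_) (hk_88320 a) : (P a a) = a). Qed.
Lemma g_top : forall a b : A, (P a (N a)) = (P b (N b)).
Proof. intros a b. exact (hk_5879 a b). Qed.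

Local Notation M := (rmeet A).
Local Notation le := (rle A).
Local Notation bot := (rbot A).
Local Notation top := (rtop A).
Local Notation atom := (is_atom A).

Lemma pC x y : P x y = P y x. Proof. apply hk_0. Qed.
Lemma pA x y z : P (P x y) z = P x (P y z). Proof. apply hk_1. Qed.
Lemma dn x : N (N x) = x. Proof. apply g_dn. Qed.
Lemma pI x : P x x = x. Proof. apply g_idem. Qed.
Lemma top_eq x : P x (N x) = top. Proof. unfold rtop, rdiv. apply g_top. Qed.
Lemma hunt x y : P (M x y) (M x (N y)) = x.
Proof. unfold rmeet. rewrite dn. apply hk_2. Qed.
Lemma mC x y : M x y = M y x. Proof. unfold rmeet. rewrite pC. reflexivity. Qed.
Lemma le_refl x : le x x. Proof. apply pI. Qed.
Lemma le_trans x y z : le x y -> le y z -> le x z.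
Proof. unfold rle. intros H1 H2. rewrite <- H2, <- pA, H1. reflexivity. Qed.
Lemma le_anti x y : le x y -> le y x -> x = y.
Proof. unfold rle. intros H1 H2. transitivity (P x y); [rewrite pC; symmetry; exact H2 | exact H1]. Qed.
Lemma le_jl x y : le x (P x y). Proof. unfold rle. rewrite <- pA, pI. reflexivity. Qed.
Lemma le_jr x y : le y (P x y). Proof. rewrite pC. apply le_jl. Qed.
Lemma join_lub x y z : le x z -> le y z -> le (P x y) z.
Proof. unfold rle. intros H1 H2. rewrite pA, H2, H1. reflexivity. Qed.
Lemma meet_l x y : le (M x y) x.
Proof. pattern x at 2. rewrite <- (hunt x y). apply le_jl. Qed.
Lemma meet_r x y : le (M x y) y. Proof. rewrite mC. apply meet_l. Qed.
Lemma mxx x : M x x = x. Proof. unfold rmeet. rewrite pI, dn. reflexivity. Qed.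
Lemma mxNx x : M x (N x) = bot.
Proof. unfold rmeet, rbot. rewrite dn, pC, top_eq. reflexivity. Qed.
Lemma pbot x : P x bot = x.
Proof. pattern x at 2. rewrite <- (hunt x x), mxx, mxNx. reflexivity. Qed.
Lemma bot_le x : le bot x. Proof. unfold rle. rewrite pC. apply pbot. Qed.
Lemma le_top x : le x top.
Proof. unfold rle. rewrite <- (top_eq x), <- pA, pI. reflexivity. Qed.
Lemma le_bot x : le x bot -> x = bot.
Proof. intros H. apply le_anti; [exact H | apply bot_le]. Qed.
Lemma compl_anti x y : le x y -> le (N y) (N x).
Proof. intros H. rewrite <- (hunt (N x) (N y)).
  unfold rmeet at 1. rewrite !dn. unfold rle in H. rewrite H. apply le_jl. Qed.
Lemma compl_anti' x y : le (N y) (N x) -> le x y.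
Proof. intros H. apply compl_anti in H. rewrite !dn in H. exact H. Qed.
Lemma meet_glb x y z : le z x -> le z y -> le z (M x y).
Proof. intros H1 H2. apply compl_anti'. unfold rmeet. rewrite dn.
  apply join_lub; apply compl_anti; assumption. Qed.
Lemma deMorgan x y : M (N x) (N y) = N (P x y).
Proof. unfold rmeet. rewrite !dn. reflexivity. Qed.
Lemma meet_bot_le x y : M x (N y) = bot -> le x y.
Proof. intros H. rewrite <- (hunt x y), H, pbot. apply meet_r. Qed.
Lemma meet_bot_lec x y : M x y = bot -> le x (N y).
Proof. intros H. apply meet_bot_le. rewrite dn. exact H. Qed.
Lemma disj z x : le z x -> le z (N x) -> z = bot.
Proof. intros H1 H2. apply le_bot. rewrite <- (mxNx x). apply meet_glb; assumption. Qed.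
Lemma le_meet_eq x y : le x y -> M x y = x.
Proof. intros H. apply le_anti. apply meet_l. apply meet_glb. apply le_refl. exact H. Qed.

Lemma atom_nz a : atom a -> a <> bot. Proof. intros [h _]; exact h. Qed.
Lemma atom_dich a x : atom a -> le a x \/ le a (N x).
Proof. intros [Hn Ha']. destruct (Ha' (M a x) (meet_l a x)) as [H|H].
  - right. apply meet_bot_lec. exact H.
  - left. rewrite <- H. apply meet_r. Qed.
Lemma atom_not_both a x : atom a -> le a x -> le a (N x) -> False.
Proof. intros Ha' H1 H2. apply (atom_nz Ha'). exact (disj H1 H2). Qed.
Lemma atom_join a x y : atom a -> le a (P x y) -> le a x \/ le a y.
Proof. intros Ha' H. destruct (atom_dich x Ha') as [h|h]; [left; exact h|].
  destruct (atom_dich y Ha') as [h'|h']; [right; exact h'|].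
  exfalso. apply (atom_not_both Ha' H). rewrite <- deMorgan. apply meet_glb; assumption. Qed.
Lemma atom_compl a x : atom a -> (le a (N x) <-> ~ le a x).
Proof. intros Ha'. split.
  - intros H1 H2. exact (atom_not_both Ha' H2 H1).
  - intros H. destruct (atom_dich x Ha'); [contradiction|assumption]. Qed.
Lemma atom_eq a b : atom a -> atom b -> le a b -> a = b.
Proof. intros Ha' [_ Hb] H. destruct (Hb a H) as [h|h]; [|exact h].
  exfalso. exact (atom_nz Ha' h). Qed.
Lemma atom_nz_le t z : atom t -> M z t <> bot -> le t z.
Proof. intros [_ Ht] H. destruct (Ht (M z t) (meet_r z t)) as [h|h]; [contradiction|].
  rewrite <- h. apply meet_l. Qed.
Lemma atom_le_nz t z : atom t -> le t z -> M z t <> bot.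
Proof. intros Ht H. rewrite mC, (le_meet_eq H). apply atom_nz. exact Ht. Qed.
Lemma exists_atom x : x <> bot -> exists a, atom a /\ le a x.
Proof. intros H. exact (Ha H). Qed.
Lemma le_by_atoms x y : (forall a, atom a -> le a x -> le a y) -> le x y.
Proof. intros H. destruct (classic (M x (N y) = bot)) as [h|h].
  - apply meet_bot_le. exact h.
  - destruct (exists_atom h) as [a [Ha' Hle]]. exfalso.
    apply (atom_not_both Ha' (H a Ha' (le_trans Hle (meet_l _ _)))).
    exact (le_trans Hle (meet_r _ _)). Qed.
Lemma nz_atom_sub p q : M p q <> bot -> exists e, atom e /\ le e p /\ le e q.
Proof. intros H. destruct (exists_atom H) as [e [He Hle]]. exists e.
  split; [exact He|split; eapply le_trans; eauto; [apply meet_l|apply meet_r]]. Qed.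

Local Notation C := (rcomp A).
Local Notation V := (rconv A).
Local Notation E := (rid A).

Lemma cD x y z : C (P x y) z = P (C x z) (C y z).
Proof. destruct HWA as [_ [_ [_ [_ [h _]]]]]. apply h. Qed.
Lemma cE x : C x E = x.
Proof. destruct HWA as [_ [_ [_ [_ [_ [h _]]]]]]. apply h. Qed.
Lemma vv x : V (V x) = x.
Proof. destruct HWA as [_ [_ [_ [_ [_ [_ [h _]]]]]]]. apply h. Qed.
Lemma vD x y : V (P x y) = P (V x) (V y).
Proof. destruct HWA as [_ [_ [_ [_ [_ [_ [_ [h _]]]]]]]]. apply h. Qed.
Lemma vC x y : V (C x y) = C (V y) (V x).
Proof. destruct HWA as [_ [_ [_ [_ [_ [_ [_ [_ [h _]]]]]]]]]. apply h. Qed.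
Lemma schr x y : le (C (V x) (N (C x y))) (N y).
Proof. destruct HWA as [_ [_ [_ [_ [_ [_ [_ [_ [_ h]]]]]]]]]. apply h. Qed.

Lemma v_inj x y : V x = V y -> x = y.
Proof. intros H. rewrite <- (vv x), <- (vv y), H. reflexivity. Qed.
Lemma v_mono x y : le x y -> le (V x) (V y).
Proof. unfold rle. intros H. rewrite <- vD, H. reflexivity. Qed.
Lemma v_le1 x y : le (V x) y -> le x (V y).
Proof. intros H. rewrite <- (vv x). apply v_mono. exact H. Qed.
Lemma v_le2 x y : le x (V y) -> le (V x) y.
Proof. intros H. rewrite <- (vv y). apply v_mono. exact H. Qed.
Lemma cmono_l x y z : le x y -> le (C x z) (C y z).
Proof. unfold rle. intros H. rewrite <- cD, H. reflexivity. Qed.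
Lemma cD2 x y z : C x (P y z) = P (C x y) (C x z).
Proof. apply v_inj. rewrite vC, vD, cD, vD, !vC. reflexivity. Qed.
Lemma cmono_r x y z : le y z -> le (C x y) (C x z).
Proof. unfold rle. intros H. rewrite <- cD2, H. reflexivity. Qed.
Lemma vE : V E = E.
Proof. transitivity (C (V E) E). symmetry; apply cE.
  apply v_inj. rewrite vC, vv. apply cE. Qed.
Lemma Ec x : C E x = x.
Proof. apply v_inj. rewrite vC, vE. apply cE. Qed.
Lemma v_bot : V bot = bot.
Proof. apply le_bot. apply v_le2. apply bot_le. Qed.
Lemma v_top : V top = top.
Proof. apply le_anti. apply le_top. apply v_le1. apply le_top. Qed.
Lemma compl_unique u v : P u v = top -> M u v = bot -> v = N u.
Proof. intros H1 H2. apply le_anti.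
  - rewrite <- (hunt v u), mC, H2, pC, pbot. apply meet_r.
  - rewrite <- (hunt (N u) v). unfold rmeet at 2. rewrite !dn, H1.
    fold (rbot A). rewrite pbot. apply meet_r. Qed.
Lemma vN x : V (N x) = N (V x).
Proof. apply compl_unique.
  - rewrite <- vD, top_eq. apply v_top.
  - apply v_inj. rewrite v_bot.
    apply (disj (x:=x)).
    + apply v_le2. apply meet_l.
    + apply v_le2. apply meet_r. Qed.
Lemma vM x y : V (M x y) = M (V x) (V y).
Proof. unfold rmeet. rewrite vN, vD, !vN. reflexivity. Qed.

Lemma cycle1 x y z : M (C x y) z = bot -> M (C (V x) z) y = bot.
Proof. intros H. rewrite mC in H. apply meet_bot_lec in H.
  apply (cmono_r (V x)) in H. apply (disj (x:=y)).
  - apply meet_r.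
  - eapply le_trans; [apply meet_l|]. eapply le_trans; [exact H|]. apply schr. Qed.
Lemma cycle2 x y z : M (C x y) z = bot -> M (C z (V y)) x = bot.
Proof. intros H.
  assert (H1 : M (C (V y) (V x)) (V z) = bot) by (rewrite <- vC, <- vM, H; apply v_bot).
  apply cycle1 in H1. rewrite vv in H1.
  transitivity (V (M (C y (V z)) (V x))).
  - rewrite vM, vC, !vv. reflexivity.
  - rewrite H1. apply v_bot. Qed.

Definition nz p q := M p q <> bot.
Lemma cyc1 x y z : nz (C x y) z <-> nz (C (V x) z) y.
Proof. unfold nz. split; intros H1 H2; apply H1.
  - apply cycle1 in H2. rewrite vv in H2. exact H2.
  - apply cycle1. exact H2. Qed.
Lemma cyc2 x y z : nz (C x y) z <-> nz (C z (V y)) x.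
Proof. unfold nz. split; intros H1 H2; apply H1.
  - apply cycle2 in H2. rewrite vv in H2. exact H2.
  - apply cycle2. exact H2. Qed.
Lemma nz_le t z : atom t -> (nz z t <-> le t z).
Proof. intros Ht. split. apply atom_nz_le; auto. apply atom_le_nz; auto. Qed.
Lemma nz_pick p q : nz p q -> exists e, atom e /\ le e p /\ le e q.
Proof. apply nz_atom_sub. Qed.

Lemma atom_v a : atom a -> atom (V a).
Proof. intros [Hn Ha']. split.
  - intros H. apply Hn. rewrite <- (vv a), H. apply v_bot.
  - intros y Hy. apply v_le2 in Hy. destruct (Ha' _ Hy) as [h|h].
    + left. rewrite <- (vv y), h. apply v_bot.
    + right. rewrite <- (vv y), h. reflexivity. Qed.
Lemma atom_self a : atom a -> nz a a.
Proof. intros Ha'. apply nz_le; auto. apply le_refl. Qed.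

Lemma id_r a : atom a -> exists e, atom e /\ le e E /\ le a (C a e).
Proof. intros Ha'. assert (H : nz (C a E) a) by (rewrite cE; apply atom_self; auto).
  apply cyc1 in H. destruct (nz_pick H) as [e [He [H1 H2]]].
  exists e. split; [auto|split; [auto|]].
  apply (nz_le _ Ha'). apply cyc1. apply (nz_le _ He). exact H1. Qed.
Lemma id_l a : atom a -> exists g, atom g /\ le g E /\ le a (C g a) /\ le g (C a (V a)).
Proof. intros Ha'. assert (H : nz (C E a) a) by (rewrite Ec; apply atom_self; auto).
  apply cyc2 in H. destruct (nz_pick H) as [g [Hg [H1 H2]]].
  exists g. split; [auto|split; [auto|split; [|auto]]].
  apply (nz_le _ Ha'). apply cyc2. apply (nz_le _ Hg). exact H1. Qed.
Lemma decomp t x y : atom t -> le t (C x y) ->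
  exists a b, atom a /\ atom b /\ le a x /\ le b y /\ le t (C a b).
Proof. intros Ht H. apply (nz_le _ Ht) in H. apply cyc1 in H.
  destruct (nz_pick H) as [b [Hb [H1 H2]]].
  apply (nz_le _ Hb) in H1. apply cyc1 in H1. apply cyc2 in H1.
  destruct (nz_pick H1) as [a [Haa [H3 H4]]].
  exists a, b. split; [auto|split; [auto|split; [auto|split; [auto|]]]].
  apply (nz_le _ Ht). apply cyc2. apply (nz_le _ Haa). exact H3. Qed.
Lemma tri_id_1 s0 s1 s2 : atom s1 -> atom s2 -> le s1 (C s2 s0) -> le s1 E -> le s2 (V s0).
Proof. intros H1 H2 Hc' He. apply (nz_le _ H1) in Hc'. apply cyc2 in Hc'.
  apply (nz_le _ H2) in Hc'. eapply le_trans; [exact Hc'|].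
  rewrite <- (Ec (V s0)) at 2. apply cmono_l. exact He. Qed.
Lemma tri_id_1' s0 s1 s2 : atom s1 -> atom s0 -> le s1 (C s2 s0) -> le s1 E -> le s0 (V s2).
Proof. intros H1 H0 Hc' He. apply (nz_le _ H1) in Hc'. apply cyc1 in Hc'.
  apply (nz_le _ H0) in Hc'. eapply le_trans; [exact Hc'|].
  rewrite <- (cE (V s2)) at 2. apply cmono_r. exact He. Qed.
Lemma tri_id_0 s0 s1 s2 : le s1 (C s2 s0) -> le s0 E -> le s1 s2.
Proof. intros Hc' He. eapply le_trans; [exact Hc'|].
  rewrite <- (cE s2) at 2. apply cmono_r. exact He. Qed.
Lemma tri_id_2 s0 s1 s2 : le s1 (C s2 s0) -> le s2 E -> le s1 s0.
Proof. intros Hc' He. eapply le_trans; [exact Hc'|].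
  rewrite <- (Ec s0) at 2. apply cmono_l. exact He. Qed.
Lemma tri_rot s0 s1 s2 : atom s1 -> atom s2 -> le s1 (C s2 s0) -> le s2 (C s1 (V s0)).
Proof. intros H1 H2 Hc'. apply (nz_le _ H1) in Hc'. apply cyc2 in Hc'.
  apply (nz_le _ H2) in Hc'. exact Hc'. Qed.
Lemma tri_rot' a b t : atom a -> atom t -> le t (C a b) -> le a (C t (V b)).
Proof. intros Ha' Ht Hc'. apply (nz_le _ Ht) in Hc'. apply cyc2 in Hc'.
  apply (nz_le _ Ha') in Hc'. exact Hc'. Qed.
Arguments tri_id_0 {s0 s1 s2}. Arguments tri_id_1 {s0 s1 s2}. Arguments tri_id_1' {s0 s1 s2}.
Arguments tri_id_2 {s0 s1 s2}. Arguments tri_rot {s0 s1 s2}. Arguments tri_rot' {a} b {t}.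

Definition mkS (a0 a1 a2 : A) (h0 : atom a0) (h1 : atom a1) (h2 : atom a2)
  (hc : le a1 (C a2 a0)) : suitable A :=
  @Suit A (fun k => match k with I0 => a0 | I1 => a1 | I2 => a2 end)
    (fun k => match k as k0 return atom (match k0 with I0 => a0 | I1 => a1 | I2 => a2 end) with
              | I0 => h0 | I1 => h1 | I2 => h2 end) hc.

Lemma set_ext (X Y : cset A) : (forall s, X s <-> Y s) -> X = Y.
Proof. intros H. apply functional_extensionality. intros s.
  apply propositional_extensionality. apply H. Qed.

Lemma p_nr2 x : in_Nr2 (phi (A:=A) x).
Proof. unfold in_Nr2, cyl, phi. apply set_ext. intros t. split.
  - intros [s [Hs Heq]]. rewrite Heq. exact Hs.
  - intros H. exists t. split; auto. Qed.

Lemma p_inj1 x y : phi (A:=A) x = phi y -> le x y.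
Proof. intros H. apply le_by_atoms. intros a Ha' Hle.
  destruct (id_r Ha') as [e [He [_ Hc']]].
  assert (E1 : phi x (mkS He Ha' Ha' Hc') = phi y (mkS He Ha' Ha' Hc')) by (rewrite H; reflexivity).
  unfold phi in E1. simpl in E1. rewrite <- E1. exact Hle. Qed.
Lemma p_inj x y : phi (A:=A) x = phi y -> x = y.
Proof. intros H. apply le_anti; apply p_inj1; auto. Qed.

Lemma p_surj X : in_Nr2 X -> exists x, phi (A:=A) x = X.
Proof. intros HX. destruct (Hc (fun a => exists s, X s /\ tr s I2 = a)) as [u [Hub Hlub]].
  exists u. apply set_ext. intros t. unfold phi. split.
  - intros Ht. destruct (classic (exists s, X s /\ tr s I2 = tr t I2)) as [[s [Xs Es]]|Hno].
    + rewrite <- HX. exists s. split; [exact Xs|symmetry; exact Es].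
    + exfalso. assert (Hu : le u (N (tr t I2))).
      { apply Hlub. intros a [s [Xs Es]]. subst a.
        destruct (atom_dich (tr t I2) (tr_atom s I2)) as [h|h]; [|exact h].
        exfalso. apply Hno. exists s. split; auto. apply atom_eq; auto; apply tr_atom. }
      exact (atom_not_both (tr_atom t I2) (le_refl _) (le_trans Ht Hu)).
  - intros Xt. apply Hub. exists t. auto. Qed.

Lemma p_plus x y : phi (P x y) = cunion (phi x) (phi y).
Proof. apply set_ext. intros t. unfold phi, cunion. split.
  - apply atom_join. apply tr_atom.
  - intros [h|h]; eapply le_trans; eauto; [apply le_jl|apply le_jr]. Qed.

Lemma p_compl x : phi (N x) = ccompl (phi x).
Proof. apply set_ext. intros t. unfold phi, ccompl. apply atom_compl. apply tr_atom. Qed.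

Lemma p_comp x y : phi (C x y) = ccomp (phi x) (phi y).
Proof. apply set_ext. intros t. unfold phi, ccomp, cyl, cinter, diag. simpl. split.
  - intros H. destruct (@decomp (tr t I2) x y (tr_atom t I2) H) as [a [b [Ha' [Hb [Hax [Hby Hab]]]]]].
    pose proof (tri_rot' b Ha' (tr_atom t I2) Hab) as hs.
    destruct (id_r Ha') as [e [He [He1 He2]]].
    destruct (id_l Hb) as [g [Hg [Hg1 [_ Hg2]]]].
    exists (mkS (atom_v Hb) Ha' (tr_atom t I2) hs). split; [|reflexivity].
    split.
    + exists (mkS He Ha' Ha' He2). simpl. auto.
    + exists (mkS (atom_v Hb) Hg Hb Hg2). simpl. auto.
  - intros [s [[[p [[Hp0 Hp2] Hsp]] [q [[Hq1 Hq2] Hsq]]] Hts]].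
    rewrite Hts.
    assert (H1 : le (tr s I1) x) by (rewrite Hsp; eapply le_trans; [exact (tri_id_0 (tr_cond p) Hp0)|exact Hp2]).
    assert (H0 : le (V (tr s I0)) y).
    { apply v_le2. rewrite Hsq. eapply le_trans.
      exact (tri_id_1' (tr_atom q I1) (tr_atom q I0) (tr_cond q) Hq1). apply v_mono. exact Hq2. }
    eapply le_trans. exact (tri_rot (tr_atom s I1) (tr_atom s I2) (tr_cond s)).
    eapply le_trans. apply cmono_l. exact H1. apply cmono_r. exact H0. Qed.

Lemma p_conv x : phi (V x) = cconv (phi x).
Proof. apply set_ext. intros t. unfold phi, cconv, cyl, cinter, diag. simpl. split.
  - intros H. pose proof (tr_atom t I2) as Ht.
    pose proof (atom_v Ht) as Hva.
    assert (Hax : le (V (tr t I2)) x) by (apply v_le2; exact H).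
    destruct (id_l Ht) as [g [Hg [Hg1 [_ Hg2]]]].
    destruct (id_l Hva) as [g' [Hg' [Hg'1 [Hg'2 _]]]].
    destruct (id_r Hva) as [e [He [He1 He2]]].
    exists (mkS Hva Hg Ht Hg2). simpl. split; [|reflexivity]. split; [exact Hg1|].
    exists (mkS Hva Hva Hg' Hg'2). simpl. split; [|reflexivity]. split; [exact Hg'1|].
    exists (mkS He Hva Hva He2). simpl. auto.
  - intros [s [[Hs1 [r [[Hr2 [p [[Hp0 Hp2] Hrp]]] Hsr]]] Hts]].
    rewrite Hts.
    assert (Hr1 : le (tr r I1) x) by (rewrite Hrp; eapply le_trans; [exact (tri_id_0 (tr_cond p) Hp0)|exact Hp2]).
    assert (Hr10 : tr r I1 = tr r I0) by (apply atom_eq; try apply tr_atom; exact (tri_id_2 (tr_cond r) Hr2)).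
    eapply le_trans. exact (tri_id_1 (tr_atom s I1) (tr_atom s I2) (tr_cond s) Hs1).
    apply v_mono. rewrite Hsr, <- Hr10. exact Hr1. Qed.

Lemma p_id : phi E = cid (A:=A).
Proof. reflexivity. Qed.

Lemma main : is_iso_onto_RaCm (@phi A).
Proof. unfold is_iso_onto_RaCm.
  refine (conj p_nr2 (conj p_inj (conj p_surj (conj p_plus (conj p_compl (conj p_comp (conj p_conv p_id))))))).
Qed.
End Main.
Unset Implicit Arguments.

Theorem theorem5 (A : ra_sig) (HWA : is_WA A) (Hc : complete A) (Ha : atomic A) :
  is_iso_onto_RaCm (@phi A).
Proof. exact (main HWA Hc Ha). Qed.
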